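(* Let $p$ be a prime number and let $1\to F\to H\to\bar H\to1$ be an exact sequence of finite groups such that $\bar H$ is abelian and generated by $r$ elements. Suppose that the $p$-Sylow subgroup $F_p$ of $F$ is normal in $F$ and $F_p\cong(\mathbb{Z}/p\mathbb{Z})^m$ for some non-negative integer $m$. Suppose further that $|F|\le B\cdot|F_p|^e$ for some positive constants $B$ and $e$, and that $F$ is generated by $F_p$ together with $s$ additional elements. Then $H$ contains a characteristic abelian subgroup of order coprime to $p$ and index at most $B^{r+s+1}\cdot|H_p|^{e(r+s+1)+r+1}$, where $H_p$ is a $p$-Sylow subgroup of $H$. *)

(* Defs.v *)
From mathcomp Require Export all_boot all_order all_fingroup all_solvable.
From Stdlib Require Export Reals.

(* Main.v *)
Require Import Defs.
From mathcomp Require Import all_algebra all_character.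
Import GroupScope GRing.Theory.

Lemma ord_act_bound (gT : finGroupType) (p : nat) (G E : {group gT}) (x : gT) :
  p.-abelem E -> G \subset 'N(E) -> x \in G ->
  exists2 k, 0 < k <= #|E| & x ^+ k \in 'C(E).
Proof.
move=> abelE nEG Gx.
have [E1|ntE] := eqVneq E 1%G.
  by exists 1%nat; rewrite ?E1 ?cards1 // cent1T inE.
pose rG := abelem_repr abelE ntE nEG.
set n := abelem_dim' (gval E).
pose M := rG x.
have pr_p : prime p by have [] := pgroup_pdiv (abelem_pgroup abelE) ntE.
pose P := [set horner_mx M (\poly_(j < n.+1) c (inord j)) | c : {ffun 'I_n.+1 -> 'F_p}].
have cardP : #|P| <= #|E|.
  rewrite -(card_abelem_rV abelE ntE) (leq_trans (leq_imset_card _ _)) //.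
  by rewrite card_ffun card_mx mul1n [X in expn _ X]card_ord.
have inP k : (M ^+ k)%R \in P.
  apply/imsetP; exists [ffun j : 'I_n.+1 => (('X^k %% char_poly M)%R)`_j] => //.
  have -> : (M ^+ k)%R = horner_mx M (('X^k)%R).
    by rewrite -{1}(horner_mx_X M) rmorphXn.
  rewrite {1}(divp_eq ('X^k)%R (char_poly M)) rmorphD rmorphM /= Cayley_Hamilton mulr0 add0r.
  congr (horner_mx M _); apply/polyP=> j; rewrite coef_poly.
  case: ifP => [jn|]; first by rewrite ffunE inordK.
  move/negbT; rewrite -leqNgt => nj; rewrite nth_default //.
  apply: leq_trans nj; rewrite -ltnS -(size_char_poly M) ltn_modp.
  by rewrite -size_poly_eq0 size_char_poly.
pose f (i : 'I_#|E|.+1) := (M ^+ i)%R.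
have : ~~ injectiveb f.
  apply: contraL cardP => /injectiveP injf; rewrite -ltnNge.
  apply: leq_trans (subset_leq_card (_ : codom f \subset P)).
    by rewrite card_codom // card_ord.
  by apply/subsetP=> _ /codomP[i ->]; exact: inP.
case/injectivePn => i [j neqij eqf].
wlog ltij : i j neqij eqf / i < j.
  move=> W; case: (ltngtP i j) => [lt|gt|eqv]; first exact: W lt.
    by apply: (W j i) gt; rewrite 1?eq_sym.
  by move/eqP: neqij; case; apply: val_inj.
exists (j - i).
  rewrite subn_gt0 ltij /= (leq_trans (leq_subr _ _)) //; exact: (ltn_ord j).
have Gk := groupX (j - i) Gx.
suff : x ^+ (j - i) \in rker rG by rewrite rker_abelem => /setIP[].
apply/rkerP; split=> //.
have uMi : (M ^+ i)%R \is a GRing.unit by rewrite -[M]/(rG x) -repr_mxX // repr_mx_unitr // groupX.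
apply: (mulIr uMi).
rewrite /= mul1r -[M]/(rG x) -repr_mxX // -repr_mxMr ?groupX // -expgD.
by rewrite subnK 1?ltnW // !repr_mxX.
Qed.

Arguments ord_act_bound {gT p G E x}.

Lemma card_gen_abelian (gT : finGroupType) (L : seq gT) :
  abelian <<[set:: L]>> -> #|<<[set:: L]>>| <= \prod_(x <- L) #[x].
Proof.
elim: L => [|x L IH] /=; first by rewrite set_nil gen0 cards1 big_nil.
rewrite set_cons big_cons => abJ.
have eJ : <<x |: [set:: L]>> = <[x]> <*> <<[set:: L]>>.
  by rewrite joing_idr /cycle joing_idl.
rewrite eJ in abJ *.
have sxL : <[x]> \subset 'C(<<[set:: L]>>).
  apply: subset_trans (joing_subl _ _) (subset_trans abJ _).
  by apply: centS; apply: joing_subr.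
rewrite cent_joinEl //.
have abL : abelian <<[set:: L]>> by apply: abelianS abJ; apply: joing_subr.
apply: leq_trans (leq_mul (leqnn #[x]) (IH abL)).
have := mul_cardG <[x]> <<[set:: L]>>; rewrite -/(order x) => ->.
by rewrite leq_pmulr // cardG_gt0.
Qed.

Arguments card_gen_abelian {gT L}.

Lemma index_capg (gT : finGroupType) (G U V : {group gT}) :
  U \subset G -> V \subset G -> #|G : U :&: V| <= #|G : U| * #|G : V|.
Proof.
move=> sUG sVG.
rewrite -(Lagrange_index sUG (subsetIl U V)) leq_mul2l indexgI; apply/orP; right.
have hU := Lagrange (subsetIl U V); have hV := Lagrange sVG.
have hM := mul_cardG U V.
have sUVG : #|(U * V)%g| <= #|G|.
  by apply: subset_leq_card; apply: mul_subG.
rewrite -indexgI.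
have pI := cardG_gt0 (U :&: V)%G; have pV := cardG_gt0 V.
rewrite -(leq_pmul2l pI) -(leq_pmul2l pV).
have hU' : (#|U :&: V| * #|U : U :&: V|)%nat = #|U| := Lagrange (subsetIl U V).
have L1 : (#|V| * (#|U :&: V| * #|U : U :&: V|))%nat = (#|(U * V)%g| * #|U :&: V|)%nat.
  by rewrite hU' mulnC hM.
have R1 : (#|V| * (#|U :&: V| * #|G : V|))%nat = (#|G| * #|U :&: V|)%nat.
  by rewrite mulnCA hV mulnC.
by rewrite L1 R1 leq_mul2r sUVG orbT.
Qed.

Lemma index_cent_seq (gT : finGroupType) (G : {group gT}) (A : {set gT}) (L : seq gT) :
  #|G : 'C_G(A :|: [set:: L])| <= #|G : 'C_G(A)| * \prod_(y <- L) #|G : 'C_G[y]|.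
Proof.
elim: L => [|y L IH]; first by rewrite set_nil setU0 big_nil muln1.
rewrite set_cons big_cons.
have e : 'C_G(A :|: (y |: [set:: L])) = 'C_G(A :|: [set:: L]) :&: 'C_G[y].
  rewrite setUCA centU; apply/setP=> z; rewrite !in_setI.
  by rewrite cent_set1; case: (z \in G) => //=; rewrite andbC.
rewrite e. have h1 := index_capg _ G ('C_G(A :|: [set:: L]))%G ('C_G[y])%G (subsetIl _ _) (subsetIl _ _).
apply: leq_trans h1 _; by rewrite [X in _ <= X]mulnCA mulnC leq_mul2l IH orbT.
Qed.

Lemma index_cent1_der (gT : finGroupType) (G F : {group gT}) (y : gT) :
  y \in G -> G \subset 'N(F) -> abelian (G / F) -> #|G : 'C_G[y]| <= #|F|.
Proof.
move=> Gy nFG abGF; rewrite index_cent1.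
have der := der1_min nFG abGF.
rewrite -(card_imset _ (mulgI y^-1)).
apply: subset_leq_card; apply/subsetP => _ /imsetP[z /imsetP[h Gh ->] ->].
by apply: (subsetP der); apply: mem_commg.
Qed.

Lemma prod_bound (T : eqType) (L : seq T) (f : T -> nat) (c : nat) :
  (forall y, y \in L -> f y <= c) -> \prod_(y <- L) f y <= expn c (size L).
Proof.
elim: L => [|y L IH] hL; first by rewrite big_nil.
rewrite big_cons /= expnS leq_mul //; first by apply: hL; rewrite mem_head.
by apply: IH => z hz; apply: hL; rewrite inE hz orbT.
Qed.

Lemma pnat_dvd_part (p m n : nat) : p.-nat m -> m %| n -> 0 < n -> m %| n`_p.
Proof. by move=> pm mn n0; rewrite -(part_pnat_id pm) partn_dvd. Qed.

Lemma INR_expn (a k : nat) : INR (expn a k) = pow (INR a) k.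
Proof.
elim: k => [|k IH]; first by rewrite expn0.
by rewrite expnS /= -IH; exact: mult_INR.
Qed.

Lemma leq_expn_base (a b k : nat) : a <= b -> expn a k <= expn b k.
Proof. by move=> ab; elim: k => [|k IH]; rewrite ?expn0 // !expnS leq_mul. Qed.

From Stdlib Require Import Reals.
Import GroupScope.

Theorem lemma2p12 (gT : finGroupType) (p r s : nat) (B e : R)
  (H F Fp : {group gT}) :
  prime p ->
  F <| H ->
  abelian (H / F) ->
  (exists X : seq (coset_of F), size X = r /\ <<[set:: X]>> = H / F) ->
  p.-Sylow(F) Fp -> Fp <| F -> p.-abelem Fp ->
  (0 < B)%R -> (0 < e)%R ->
  (INR #|F| <= B * Rpower (INR #|Fp|) e)%R ->
  (exists S : seq gT, size S = s /\ << (Fp :|: [set:: S]) >> = F) ->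
  forall Hp : {group gT}, p.-Sylow(H) Hp ->
  exists K : {group gT},
    [/\ K \char H, abelian K, coprime #|K| p &
      (INR #|H : K| <=
         B ^ (r + s + 1) *
         Rpower (INR #|Hp|) (e * INR (r + s + 1) + INR r + 1))%R].
Proof.
move=> pr_p nFH abHF [X [sizeX genX]] sylFp nFpF abFp B0 e0 hF [S [sizeS genF]] Hp sylHp.
have sFH := normal_sub nFH.
have nFH' := normal_norm nFH.
have charFp : Fp \char F by rewrite -(normal_Hall_pcore sylFp nFpF) pcore_char.
have nFpH : Fp <| H := char_normal_trans charFp nFH.
have sFpF : Fp \subset F := pHall_sub sylFp.
pose Xl := map (fun x : coset_of F => repr x) X.
have XlH : forall y, y \in Xl -> y \in H.
  move=> y /mapP[x Xx ->].
  have xHF : x \in H / F by rewrite -genX mem_gen // inE.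
  rewrite -(quotientGK nFH); apply: mem_morphpre; first exact: repr_coset_norm.
  by rewrite /= coset_reprK.
have SF : forall y, y \in S -> y \in F.
  by move=> y Sy; rewrite -genF mem_gen // !inE Sy orbT.
pose Gen := Fp :|: [set:: S ++ Xl].
have GenH : Gen \subset H.
  apply/subsetP=> y; rewrite !inE mem_cat => /orP[Fpy|/orP[/SF Fy|/XlH //]].
    exact: (subsetP sFH) ((subsetP sFpF) _ Fpy).
  exact: (subsetP sFH).
have HGen : H \subset <<Gen>>.
  have sFG : F \subset <<Gen>>.
    rewrite -{1}genF genS //; apply/subsetP => y; rewrite !inE mem_cat.
    by case/orP=> [->|->]; rewrite ?orbT.
  rewrite -(quotientSGK nFH' sFG) -genX gen_subG; apply/subsetP=> x; rewrite inE => Xx.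
  rewrite -(coset_reprK x); apply: mem_quotient; apply: mem_gen.
  by rewrite !inE mem_cat; apply/orP; right; apply/orP; right; apply: map_f.
pose M := 'C_H(Gen)%G.
have MZ : M \subset 'Z(H).
  by apply: setIS; have := centS HGen; rewrite cent_gen.
have hM : #|H : M| <= (#|H : 'C_H(Fp)| * expn #|F| (size (S ++ Xl)))%nat.
  apply: leq_trans (index_cent_seq _ H Fp (S ++ Xl)) _.
  rewrite leq_mul2l; apply/orP; right.
  apply: prod_bound => y; rewrite mem_cat => /orP[/SF Fy|/XlH Hy].
    exact: index_cent1_der (subsetP sFH _ Fy) nFH' abHF.
  exact: index_cent1_der Hy nFH' abHF.
have hC : #|H : 'C_H(Fp)| <= (#|F| * expn #|Fp| r)%nat.
  pose C := 'C_H(Fp)%G.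
  have nCH : H \subset 'N(C) by rewrite normsI ?normG // norms_cent // normal_norm.
  have sCH : C \subset H := subsetIl _ _.
  pose D := (F <*> C)%G.
  have nDH : H \subset 'N(D) := normsY nFH' nCH.
  have sDH : D \subset H by rewrite join_subG sFH sCH.
  have sCD : C \subset D := joing_subr _ _.
  have sFD : F \subset D := joing_subl _ _.
  rewrite -(Lagrange_index sDH sCD) mulnC leq_mul //.
    have eD : (D : {set gT}) = (F * C)%g := norm_joinEl (subset_trans sFH nCH).
    rewrite -(leq_pmul2l (cardG_gt0 C)) (Lagrange sCD) eD mulnC.
    have := mul_cardG F C => ->.
    by rewrite leq_pmulr // cardG_gt0.
  rewrite -card_quotient //.
  pose L' := map (coset D) Xl.
  have sub1 : H / D \subset <<[set:: L']>>.
    apply: subset_trans (quotientS D HGen) _.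
    rewrite quotient_gen ?(subset_trans GenH nDH) // gen_subG.
    apply/subsetP => _ /morphimP[y Ny Geny ->].
    move: Geny; rewrite !inE mem_cat => /orP[Fpy | /orP[Sy | Xly]].
    - by rewrite /= coset_id ?group1 // (subsetP sFD) // (subsetP sFpF).
    - by rewrite /= coset_id ?group1 // (subsetP sFD) // SF.
    - by apply: mem_gen; rewrite inE; apply: map_f.
  have sub2 : <<[set:: L']>> \subset H / D.
    rewrite gen_subG; apply/subsetP => z; rewrite inE => /mapP[y Xly ->].
    exact: mem_quotient (XlH y Xly).
  have abHD : abelian (H / D) := sub_der1_abelian (subset_trans (der1_min nFH' abHF) sFD).
  apply: leq_trans (subset_leq_card sub1) _.
  apply: leq_trans (card_gen_abelian (abelianS sub2 abHD)) _.
  have -> : r = size L' by rewrite size_map size_map sizeX.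
  apply: prod_bound => _ /mapP[y Xly ->].
  have Hy := XlH y Xly.
  have [k /andP[k0 kFp] ck] := ord_act_bound abFp (normal_norm nFpH) Hy.
  apply: leq_trans kFp; apply: dvdn_leq k0 _.
  rewrite order_dvdn -morphX ?(subsetP nDH) //; apply/eqP; apply: coset_id.
  by apply: (subsetP sCD); apply/setIP; split; [rewrite groupX | exact: ck].
pose Z := 'Z(H)%G.
pose K := 'O_(p^')(Z)%G.
exists K; split.
- exact: char_trans (pcore_char _ _) (center_char _).
- exact: abelianS (pcore_sub _ _) (center_abelian _).
- by apply: (pnat_coprime (pcore_pgroup _ _)); rewrite pnatNK pnat_id.
have hZK : #|Z : K| <= #|Hp|.
  have hall := nilpotent_pcore_Hall p^' (abelian_nil (center_abelian H)).
  have pZK : p.-nat #|Z : K| by rewrite -pnatNK; case/and3P: hall.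
  rewrite (card_Hall sylHp); apply: dvdn_leq; first exact: part_gt0.
  apply: pnat_dvd_part pZK _ (cardG_gt0 H).
  exact: dvdn_trans (dvdn_indexg _ _) (cardSg (center_sub _)).
have hFpHp : #|Fp| <= #|Hp|.
  rewrite (card_Hall sylHp); apply: dvdn_leq; first exact: part_gt0.
  apply: pnat_dvd_part (pHall_pgroup sylFp) _ (cardG_gt0 H).
  exact: cardSg (subset_trans sFpF sFH).
have hHZ : #|H : Z| <= #|H : M|.
  by apply: dvdn_leq; [exact: indexg_gt0 | exact: indexgS].
have hnat : #|H : K| <= (expn #|F| (r + s + 1) * expn #|Hp| r.+1)%nat.
  rewrite -(Lagrange_index (center_sub H) (pcore_sub _ _)).
  rewrite size_cat size_map sizeS sizeX in hM.
  apply: leq_trans (leq_mul (leq_trans hHZ (leq_trans hM (leq_mul hC (leqnn _)))) hZK) _.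
  have e1 : expn #|F| (r + s + 1) = (#|F| * expn #|F| (s + r))%nat by rewrite addn1 expnS addnC.
  rewrite e1 expnSr.
  apply: (@leq_trans ((#|F| * expn #|F| (s + r)) * (expn #|Fp| r * #|Hp|))%nat).
    by rewrite -!mulnA [(expn #|Fp| r * _)%nat]mulnCA.
  by rewrite leq_mul2l leq_mul2r leq_expn_base ?orbT.
have Hp0 : (0 < INR #|Hp|)%R by apply: lt_0_INR; apply/ltP; exact: cardG_gt0.
have Fp0 : (0 < INR #|Fp|)%R by apply: lt_0_INR; apply/ltP; exact: cardG_gt0.
have hFR : (INR #|F| <= B * Rpower (INR #|Hp|) e)%R.
  apply: Rle_trans hF _; apply: Rmult_le_compat_l; first exact: Rlt_le.
  apply: Rle_Rpower_l; first exact: Rlt_le.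
  by split; [exact: Fp0 | apply: le_INR; apply/leP].
apply: Rle_trans (le_INR _ _ (elimT leP hnat)) _.
rewrite mult_INR !INR_expn.
rewrite Rplus_assoc Rpower_plus -S_INR Rpower_pow // -Rmult_assoc.
apply: Rmult_le_compat_r; first by apply: pow_le; exact: Rlt_le.
rewrite -Rpower_mult Rpower_pow; last by rewrite /Rpower; exact: exp_pos.
rewrite -Rpow_mult_distr; apply: pow_incr; split; [exact: pos_INR | exact: hFR].
Qed.
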